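(* Let $T:\mathcal{B}(\mathcal{H}_2)\to\mathcal{B}(\mathcal{H}_1)$ be a channel. Let $(n_\alpha)_{\alpha\in\mathbb{N}}$ be a strictly increasing sequence of positive integers such that $\lim_{\alpha\to\infty} n_{\alpha+1}/n_\alpha=1$, and let $M_\alpha$ be positive integers such that $\lim_{\alpha\to\infty}\Delta(T^{\otimes n_\alpha},M_\alpha)=0$. Then every $c\ge 0$ with $$c<\liminf_{\alpha\to\infty}\frac{\log_2 M_\alpha}{n_\alpha}$$ is an achievable rate for $T$. Moreover, if in addition there are constants $\mu,\lambda\ge 0$ with $\Delta(T^{\otimes n_\alpha},M_\alpha)\le \mu e^{-\lambda n_\alpha}$ for all $\alpha$, then for every such $c$ $$\liminf_{n\to\infty}\frac{-1}{n}\log\Delta\bigl(T^{\otimes n},\lfloor 2^{cn}\rfloor\bigr)\ge\lambda .$$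
   Context: All Hilbert spaces are finite dimensional; $\mathcal{B}(\mathcal{H})$ denotes the linear operators on $\mathcal{H}$. A channel with input space $\mathcal{H}_1$ and output space $\mathcal{H}_2$ is a completely positive unital linear map $T:\mathcal{B}(\mathcal{H}_2)\to\mathcal{B}(\mathcal{H}_1)$ (Heisenberg picture). For a linear map $S:\mathcal{B}(\mathcal{K}_2)\to\mathcal{B}(\mathcal{K}_1)$ its cb-norm is $\|S\|_{cb}=\sup\{\|(S\otimes \mathrm{id}_{\mathcal{B}(\mathbb{C}^k)})(A)\| : k\in\mathbb{N},\ A\in\mathcal{B}(\mathcal{K}_2\otimes\mathbb{C}^k),\ \|A\|\le1\}$. For a channel $T:\mathcal{B}(\mathcal{H}_2)\to\mathcal{B}(\mathcal{H}_1)$ and a positive integer $M$, $\Delta(T,M)=\inf_{E,D}\|E\circ T\circ D-\mathrm{id}\|_{cb}$, where $\mathcal{H}_0$ is a Hilbert space of dimension $M$, $\mathrm{id}$ is the identity map of $\mathcal{B}(\mathcal{H}_0)$, and the infimum runs over all channels $D:\mathcal{B}(\mathcal{H}_0)\to\mathcal{B}(\mathcal{H}_2)$ (decodings) and $E:\mathcal{B}(\mathcal{H}_1)\to\mathcal{B}(\mathcal{H}_0)$ (encodings). $T^{\otimes n}:\mathcal{B}(\mathcal{H}_2^{\otimes n})\to\mathcal{B}(\mathcal{H}_1^{\otimes n})$ is the $n$-fold tensor power. A number $c\ge0$ is an achievable rate for $T$ if $\lim_{n\to\infty}\Delta(T^{\otimes n},\lfloor 2^{cn}\rfloor)=0$;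 $\lfloor x\rfloor$ is the largest integer $\le x$. In the last display $\log$ is the natural logarithm. *)

(* Defs.v *)
From HB Require Import structures.
From mathcomp Require Import all_boot all_order all_algebra.
From mathcomp Require Import complex mxtens.
From mathcomp Require Import all_classical all_reals all_analysis.
Set Implicit Arguments. Unset Strict Implicit. Unset Printing Implicit Defensive.
Import Order.TTheory GRing.Theory Num.Theory.
Import numFieldNormedType.Exports.
Local Open Scope ring_scope.
Local Open Scope classical_set_scope.

Section QChannels.
Variable R : realType.
Local Notation C := (complex R).

Definition vnorm2 n (v : 'cV[C]_n) : R :=
  \sum_(i < n) ((complex.Re (v i 0)) ^+ 2 + (complex.Im (v i 0)) ^+ 2).
Definition vnorm n (v : 'cV[C]_n) : R := Num.sqrt (vnorm2 v).

Definition opnorm m n (A : 'M[C]_(m, n)) : R :=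
  sup [set r : R | exists v : 'cV[C]_n, vnorm v <= 1 /\ r = vnorm (A *m v)].

Definition adjmx m n (A : 'M[C]_(m, n)) : 'M[C]_(n, m) :=
  \matrix_(i, j) conjc (A j i).
Definition psd n (A : 'M[C]_n) : Prop := exists B : 'M[C]_n, A = adjmx B *m B.

(* tensor product S1 (x) S2 of linear maps between matrix algebras, defined on
   the matrix-unit basis (Kronecker convention of mxtens: (i,p) |-> i*a2 + p) *)
Definition tensmap a1 a2 b1 b2 (S1 : 'M[C]_a1 -> 'M[C]_b1) (S2 : 'M[C]_a2 -> 'M[C]_b2)
  (A : 'M[C]_(a1 * a2)) : 'M[C]_(b1 * b2) :=
  \sum_(i < a1) \sum_(j < a1) \sum_(p < a2) \sum_(q < a2)
     A (mxtens_index (i, p)) (mxtens_index (j, q)) *: (S1 (delta_mx i j) *t S2 (delta_mx p q)).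

Definition ampl a b (S : 'M[C]_a -> 'M[C]_b) k : 'M[C]_(a * k) -> 'M[C]_(b * k) :=
  tensmap S (@id 'M[C]_k).
Arguments ampl {a b} S k.

(* channel: linear, completely positive, unital map B(H2) -> B(H1) (Heisenberg picture) *)
Definition channel d1 d2 (T : 'M[C]_d2 -> 'M[C]_d1) : Prop :=
  [/\ linear T,
      T 1%:M = 1%:M &
      forall (k : nat) (A : 'M[C]_(d2 * k)), psd A -> psd (ampl T k A)].

Definition cbnorm a b (S : 'M[C]_a -> 'M[C]_b) : R :=
  sup [set r : R | exists (k : nat) (A : 'M[C]_(a * k.+1)),
                     opnorm A <= 1 /\ r = opnorm (ampl S k.+1 A)].

Definition Delta d1 d2 (T : 'M[C]_d2 -> 'M[C]_d1) (M : nat) : R :=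
  inf [set r : R | exists (E : 'M[C]_d1 -> 'M[C]_M) (D : 'M[C]_M -> 'M[C]_d2),
          channel E /\ channel D /\
          r = cbnorm (fun A : 'M[C]_M => E (T (D A)) - A)].

Fixpoint pdim (d n : nat) : nat := if n is n'.+1 then d * pdim d n' else 1%N.

Fixpoint tpow d1 d2 (T : 'M[C]_d2 -> 'M[C]_d1) (n : nat) :
    'M[C]_(pdim d2 n) -> 'M[C]_(pdim d1 n) :=
  match n as n0 return 'M[C]_(pdim d2 n0) -> 'M[C]_(pdim d1 n0) with
  | 0 => fun A => A
  | n'.+1 => tensmap T (@tpow d1 d2 T n')
  end.
Arguments tpow {d1 d2} T n.

Definition achievable d1 d2 (T : 'M[C]_d2 -> 'M[C]_d1) (c : R) : Prop :=
  (fun n : nat => Delta (tpow T n) (Num.truncn ((2 : R) `^ (c * n%:R))))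
     @ \oo --> (0 : R).

(* the sequence  -(1/n) log Delta(...)  in the extended reals (log 0 = -oo) *)
Definition err_exponent_seq d1 d2 (T : 'M[C]_d2 -> 'M[C]_d1) (c : R) (n : nat) : \bar R :=
  let x := Delta (tpow T n) (Num.truncn ((2 : R) `^ (c * n%:R))) in
  if x == 0 then +oo%E else ((- ln x) / n%:R)%:E.

End QChannels.

Arguments tpow {R d1 d2} T n.
Arguments ampl {R a b} S k.

(* Main.v *)
Require Import Defs.
From HB Require Import structures.
From mathcomp Require Import all_boot all_order all_algebra.
From mathcomp Require Import complex mxtens sesquilinear spectral.
From mathcomp Require Import all_classical all_reals all_analysis.
From mathcomp Require Import ring lra.
Import Order.TTheory GRing.Theory Num.Theory.
Import numFieldNormedType.Exports.
Local Open Scope ring_scope.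
Local Open Scope classical_set_scope.

Set Implicit Arguments. Unset Strict Implicit. Unset Printing Implicit Defensive.

Section P1.
Variable R : realType.
Local Notation C := (complex R).
Local Notation idx := mxtens_index.

Lemma sum_tens (V : nmodType) m n (F : 'I_(m*n) -> V) :
  \sum_(y < m*n) F y = \sum_(i < m) \sum_(j < n) F (idx (i, j)).
Proof.
rewrite pair_bigA /= (reindex (@mxtens_index m n)) /=.
  by apply: eq_bigr => -[i j].
by exists (@mxtens_unindex m n) => x _; [exact: mxtens_indexK | exact: mxtens_unindexK].
Qed.

Lemma idx_eq m n (a b : 'I_m * 'I_n) : (idx a == idx b) = (a == b).
Proof. exact: (inj_eq (can_inj (@mxtens_indexK m n))). Qed.

Lemma tens_delta m1 n1 m2 n2 (i : 'I_m1) (j : 'I_n1) (p : 'I_m2) (q : 'I_n2) :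
  (delta_mx i j : 'M[C]_(m1,n1)) *t (delta_mx p q : 'M[C]_(m2,n2))
  = delta_mx (idx (i, p)) (idx (j, q)).
Proof.
apply/matrixP => x y; case: (mxtens_indexP x) => i' p'; case: (mxtens_indexP y) => j' q'.
rewrite tensmxE !mxE !idx_eq !xpair_eqE.
by case: (i' == i); case: (j' == j); case: (p' == p); case: (q' == q);
  rewrite /= ?mulr1 ?mulr0 ?mul0r.
Qed.

Section Lin.
Variables (m n p q : nat) (F : 'M[C]_(m,n) -> 'M[C]_(p,q)).
Hypothesis lF : linear F.
Lemma lin0 : F 0 = 0.
Proof. by have := lF (-1) 0 0; rewrite scaleN1r oppr0 addr0 scaleN1r addNr. Qed.
Lemma linD x y : F (x + y) = F x + F y.
Proof. by have := lF 1 x y; rewrite !scale1r. Qed.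
Lemma linZ a x : F (a *: x) = a *: F x.
Proof. by have := lF a x 0; rewrite !addr0 lin0 addr0. Qed.
Lemma linN x : F (- x) = - F x.
Proof. by rewrite -scaleN1r linZ scaleN1r. Qed.
Lemma linB x y : F (x - y) = F x - F y.
Proof. by rewrite linD linN. Qed.
Lemma linsum I (r : seq I) (P : pred I) (G : I -> 'M[C]_(m,n)) :
  F (\sum_(i <- r | P i) G i) = \sum_(i <- r | P i) F (G i).
Proof. exact: (big_morph F linD lin0). Qed.
End Lin.

Lemma lin_comp m n p q r s (F : 'M[C]_(p,q) -> 'M[C]_(r,s)) (G : 'M[C]_(m,n) -> 'M[C]_(p,q)) :
  linear F -> linear G -> linear (fun A => F (G A)).
Proof. by move=> lF lG a x y; rewrite lG lF. Qed.

Lemma lin_id m n : linear (@id 'M[C]_(m,n)).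
Proof. by []. Qed.

Lemma lin_ext1 m n p q (F G : 'M[C]_(m,n) -> 'M[C]_(p,q)) :
  linear F -> linear G -> (forall i j, F (delta_mx i j) = G (delta_mx i j)) ->
  forall A, F A = G A.
Proof.
move=> lF lG H A; rewrite (matrix_sum_delta A) (linsum lF) (linsum lG).
apply: eq_bigr => i _; rewrite (linsum lF) (linsum lG).
by apply: eq_bigr => j _; rewrite (linZ lF) (linZ lG) H.
Qed.

Lemma lin_ext2 m1 m2 n1 n2 p q (F G : 'M[C]_(m1 * m2, n1 * n2) -> 'M[C]_(p,q)) :
  linear F -> linear G ->
  (forall i j k l, F (delta_mx i j *t delta_mx k l) = G (delta_mx i j *t delta_mx k l)) ->
  forall A, F A = G A.
Proof.
move=> lF lG H; apply: lin_ext1 => // x y.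
case: (mxtens_indexP x) => i k; case: (mxtens_indexP y) => j l.
by rewrite -tens_delta H.
Qed.

Lemma tensmxDl m n p q (A B : 'M[C]_(m,n)) (X : 'M[C]_(p,q)) :
  (A + B) *t X = A *t X + B *t X.
Proof. by apply/matrixP => i j; rewrite !mxE mulrDl. Qed.
Lemma tensmxZl m n p q a (A : 'M[C]_(m,n)) (X : 'M[C]_(p,q)) :
  (a *: A) *t X = a *: (A *t X).
Proof. by apply/matrixP => i j; rewrite !mxE mulrA. Qed.
Lemma tensmxDr m n p q (A B : 'M[C]_(m,n)) (X : 'M[C]_(p,q)) :
  X *t (A + B) = X *t A + X *t B.
Proof. by apply/matrixP => i j; rewrite !mxE mulrDr. Qed.
Lemma tensmxZr m n p q a (A : 'M[C]_(m,n)) (X : 'M[C]_(p,q)) :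
  X *t (a *: A) = a *: (X *t A).
Proof. by apply/matrixP => i j; rewrite !mxE mulrCA. Qed.

Lemma lin_tl m n p q (X : 'M[C]_(p,q)) : linear (fun A : 'M[C]_(m,n) => A *t X).
Proof. by move=> a A B; rewrite tensmxDl tensmxZl. Qed.
Lemma lin_tr m n p q (X : 'M[C]_(p,q)) : linear (fun A : 'M[C]_(m,n) => X *t A).
Proof. by move=> a A B; rewrite tensmxDr tensmxZr. Qed.

Lemma tensmap_lin a1 a2 b1 b2 (S1 : 'M[C]_a1 -> 'M[C]_b1) (S2 : 'M[C]_a2 -> 'M[C]_b2) :
  linear (tensmap S1 S2).
Proof.
move=> a A B; rewrite /tensmap scaler_sumr -big_split; apply: eq_bigr => i _.
rewrite scaler_sumr -big_split; apply: eq_bigr => j _.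
rewrite scaler_sumr -big_split; apply: eq_bigr => k _.
rewrite scaler_sumr -big_split; apply: eq_bigr => l _.
by rewrite !mxE scalerDl scalerA.
Qed.

Lemma tensmap_delta a1 a2 b1 b2 (S1 : 'M[C]_a1 -> 'M[C]_b1) (S2 : 'M[C]_a2 -> 'M[C]_b2)
  i j k l :
  tensmap S1 S2 (delta_mx i j *t delta_mx k l) = S1 (delta_mx i j) *t S2 (delta_mx k l).
Proof.
rewrite /tensmap (bigD1 i) //= [\sum_(_ < _ | _ != _) _]big1 ?addr0; last first.
  move=> i' ni'. apply: big1 => j' _; apply: big1 => k' _; apply: big1 => l' _.
  by rewrite tensmxE !mxE (negbTE ni') /= !mul0r scale0r.
rewrite (bigD1 j) //= [\sum_(_ < _ | _ != _) _]big1 ?addr0; last first.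
  move=> j' nj'; apply: big1 => k' _; apply: big1 => l' _.
  by rewrite tensmxE !mxE (negbTE nj') andbF /= !mul0r scale0r.
rewrite (bigD1 k) //= [\sum_(_ < _ | _ != _) _]big1 ?addr0; last first.
  move=> k' nk'; apply: big1 => l' _.
  by rewrite tensmxE !mxE (negbTE nk') /= !mulr0 scale0r.
rewrite (bigD1 l) //= [\sum_(_ < _ | _ != _) _]big1 ?addr0; last first.
  move=> l' nl'.
  by rewrite tensmxE !mxE (negbTE nl') andbF /= !mulr0 scale0r.
by rewrite tensmxE !mxE !eqxx /= mulr1 scale1r.
Qed.

Lemma tensmap_tens a1 a2 b1 b2 (S1 : 'M[C]_a1 -> 'M[C]_b1) (S2 : 'M[C]_a2 -> 'M[C]_b2)
  X Y : linear S1 -> linear S2 -> tensmap S1 S2 (X *t Y) = S1 X *t S2 Y.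
Proof.
move=> l1 l2.
pose F := fun X => tensmap S1 S2 (X *t Y).
pose G := fun X => S1 X *t S2 Y.
apply: (@lin_ext1 _ _ _ _ F G).
- exact: (lin_comp (tensmap_lin S1 S2) (lin_tl _)).
- exact: (lin_comp (lin_tl _) l1).
move=> i j; rewrite /F /G.
pose F' := fun Y => tensmap S1 S2 (delta_mx i j *t Y).
pose G' := fun Y => S1 (delta_mx i j) *t S2 Y.
apply: (@lin_ext1 _ _ _ _ F' G').
- exact: (lin_comp (tensmap_lin S1 S2) (lin_tr _)).
- exact: (lin_comp (lin_tr _) l2).
by move=> k l; rewrite /F' /G' tensmap_delta.
Qed.

Lemma ampl_lin a b (S : 'M[C]_a -> 'M[C]_b) k : linear (ampl S k).
Proof. exact: tensmap_lin. Qed.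

Lemma ampl_delta a b (S : 'M[C]_a -> 'M[C]_b) k i j p q :
  ampl S k (delta_mx i j *t delta_mx p q) = S (delta_mx i j) *t delta_mx p q.
Proof. exact: tensmap_delta. Qed.

Lemma ampl_comp a b c (F : 'M[C]_b -> 'M[C]_c) (G : 'M[C]_a -> 'M[C]_b) k A :
  linear F -> ampl (fun X => F (G X)) k A = ampl F k (ampl G k A).
Proof.
move=> lF; apply: (@lin_ext2 _ _ _ _ _ _ (ampl (fun X => F (G X)) k)
   (fun A => ampl F k (ampl G k A))).
- exact: ampl_lin.
- by apply: lin_comp; exact: ampl_lin.
move=> i j p q; rewrite !ampl_delta /ampl tensmap_tens //.
Qed.

Lemma tpow_lin d1 d2 (T : 'M[C]_d2 -> 'M[C]_d1) n : linear (tpow T n).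
Proof. by case: n => [|n] /=; [exact: lin_id | exact: tensmap_lin]. Qed.

End P1.

Section P2.
Variable R : realType.
Local Notation C := (complex R).
Local Notation idx := mxtens_index.
Local Notation unidx := mxtens_unindex.

Lemma adjmxE m n (A : 'M[C]_(m,n)) i j : adjmx A i j = conjc (A j i).
Proof. by rewrite mxE. Qed.

Lemma adjmxK m n (A : 'M[C]_(m,n)) : adjmx (adjmx A) = A.
Proof. by apply/matrixP => i j; rewrite !mxE conjcK. Qed.

Lemma adjmxM m n p (A : 'M[C]_(m,n)) (B : 'M[C]_(n,p)) :
  adjmx (A *m B) = adjmx B *m adjmx A.
Proof.
apply/matrixP => i j; rewrite !mxE rmorph_sum; apply: eq_bigr => k _.
by rewrite !mxE rmorphM mulrC.
Qed.

Lemma adjmx_tens m n p q (A : 'M[C]_(m,n)) (B : 'M[C]_(p,q)) :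
  adjmx (A *t B) = adjmx A *t adjmx B.
Proof.
apply/matrixP => x y; case: (mxtens_indexP x) => i k; case: (mxtens_indexP y) => j l.
by rewrite tensmxE !mxE !mxtens_indexK rmorphM.
Qed.

Lemma adjmx1 n : adjmx (1%:M : 'M[C]_n) = 1%:M.
Proof. by apply/matrixP => i j; rewrite !mxE rmorph_nat eq_sym. Qed.

Lemma adjmx_tc m n (A : 'M[C]_(m,n)) : adjmx A = map_mx Num.conj (A ^T).
Proof. by apply/matrixP => i j; rewrite !mxE. Qed.

Lemma psd_pad p n (G : 'M[C]_(p,n)) : (p <= n)%N -> psd (adjmx G *m G).
Proof.
move=> pn.
pose P : 'M[C]_(n,p) := \matrix_(i, j) ((i : nat) == (j : nat))%:R.
have PP : adjmx P *m P = 1%:M.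
  apply/matrixP => i j; rewrite !mxE (bigD1 (widen_ord pn i)) //= big1 ?addr0.
    by rewrite !mxE /= eqxx rmorph_nat mul1r.
  move=> k nk; rewrite !mxE.
  have -> : ((k : nat) == (i : nat)) = false.
    by apply/negbTE; apply: contra nk => /eqP e; apply/eqP/val_inj.
  by rewrite rmorph0 mul0r.
exists (P *m G); by rewrite adjmxM !mulmxA -(mulmxA (adjmx G)) PP mulmx1.
Qed.

Lemma psd_gram p n (G : 'M[C]_(p,n)) : psd (adjmx G *m G).
Proof.
pose W := adjmx G.
pose Q := schmidt (row_base W).
have uQ : Q \is unitarymx by apply: schmidt_unitarymx; exact: rank_leq_col.
have sWQ : (W <= Q)%MS.
  by apply: (submx_trans _ (schmidt_sub _)); rewrite eq_row_base.
have [D WD] := submxP sWQ.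
have -> : adjmx G *m G = adjmx (adjmx D) *m adjmx D.
  have -> : adjmx G *m G = W *m adjmx W by rewrite /W adjmxK.
  have -> : W *m adjmx W = (D *m Q) *m adjmx (D *m Q) by rewrite -WD.
  rewrite adjmxM mulmxA -(mulmxA D) [adjmx Q]adjmx_tc (unitarymxP uQ) mulmx1.
  by rewrite adjmxK.
by apply: psd_pad; exact: rank_leq_row.
Qed.

Definition subm m n p q (f : 'I_m -> 'I_p) (g : 'I_n -> 'I_q) (X : 'M[C]_(p,q)) :
  'M[C]_(m,n) := \matrix_(i, j) X (f i) (g j).

Lemma subm_lin m n p q (f : 'I_m -> 'I_p) (g : 'I_n -> 'I_q) : linear (subm f g).
Proof. by move=> a A B; apply/matrixP => i j; rewrite !mxE. Qed.

Lemma psd_subm m n (f : 'I_m -> 'I_n) (A : 'M[C]_n) : psd A -> psd (subm f f A).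
Proof.
case=> B ->.
have -> : subm f f (adjmx B *m B) = adjmx (subm id f B) *m subm id f B.
  by apply/matrixP => i j; rewrite !mxE; apply: eq_bigr => k _; rewrite !mxE.
exact: psd_gram.
Qed.

Lemma psd_tens1l r n (A : 'M[C]_n) : psd A -> psd ((1%:M : 'M[C]_r) *t A).
Proof.
case=> B ->; exists (1%:M *t B).
by rewrite adjmx_tens adjmx1 tensmx_mul mul1mx.
Qed.

Lemma psd_tens1r r n (A : 'M[C]_n) : psd A -> psd (A *t (1%:M : 'M[C]_r)).
Proof.
case=> B ->; exists (B *t 1%:M).
by rewrite adjmx_tens adjmx1 tensmx_mul mul1mx.
Qed.

Lemma tens11 m n : (1%:M : 'M[C]_m) *t (1%:M : 'M[C]_n) = 1%:M.
Proof.
apply/matrixP => x y; case: (mxtens_indexP x) => i k; case: (mxtens_indexP y) => j l.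
by rewrite tensmxE !mxE idx_eq xpair_eqE; case: (i == j); case: (k == l);
  rewrite /= ?mulr1 ?mulr0 ?mul0r.
Qed.

Lemma ch_comp a b c (F : 'M[C]_b -> 'M[C]_c) (G : 'M[C]_a -> 'M[C]_b) :
  channel F -> channel G -> channel (fun A => F (G A)).
Proof.
case=> lF uF cF [lG uG cG]; split.
- exact: lin_comp.
- by rewrite uG uF.
- by move=> k A pA; rewrite ampl_comp //; apply: cF; apply: cG.
Qed.

Definition fdx m n k (f : 'I_m -> 'I_n) (x : 'I_(m * k)) : 'I_(n * k) :=
  idx (f (unidx x).1, (unidx x).2).

Lemma ampl_subm m n (f : 'I_m -> 'I_n) k A :
  ampl (subm f f) k A = subm (fdx (k:=k) f) (fdx (k:=k) f) A.
Proof.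
move: A; apply: lin_ext2; [exact: ampl_lin | exact: subm_lin |].
move=> i j p q; rewrite ampl_delta.
apply/matrixP => x y; case: (mxtens_indexP x) => i' p'; case: (mxtens_indexP y) => j' q'.
by rewrite tensmxE !mxE /fdx !mxtens_indexK.
Qed.

Lemma fdx_inj m n k (f : 'I_m -> 'I_n) : injective f -> injective (fdx (k:=k) f).
Proof.
move=> injf x y; case: (mxtens_indexP x) => i p; case: (mxtens_indexP y) => j q.
rewrite /fdx !mxtens_indexK /= => /(can_inj (@mxtens_indexK _ _)) [/injf -> ->].
by [].
Qed.

Lemma ch_subm m n (f : 'I_m -> 'I_n) : injective f -> channel (subm f f).
Proof.
move=> injf; split.
- exact: subm_lin.
- by apply/matrixP => i j; rewrite !mxE (inj_eq injf).
by move=> k A pA; rewrite ampl_subm; exact: psd_subm.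
Qed.

Definition h1r m r k (x : 'I_(m * r * k)) : 'I_(m * k * r) :=
  idx (idx ((unidx (unidx x).1).1, (unidx x).2), (unidx (unidx x).1).2).

Lemma h1r_inj m r k : injective (@h1r m r k).
Proof.
move=> x y; case: (mxtens_indexP x) => a p; case: (mxtens_indexP y) => b q.
case: (mxtens_indexP a) => i s; case: (mxtens_indexP b) => j t.
rewrite /h1r !mxtens_indexK /= => /eqP; rewrite !idx_eq !xpair_eqE.
by rewrite idx_eq xpair_eqE => /andP[/andP[/eqP -> /eqP ->] /eqP ->].
Qed.

Lemma ampl_t1r m r k A :
  ampl (fun X : 'M[C]_m => X *t (1%:M : 'M[C]_r)) k A
     = subm (@h1r m r k) (@h1r m r k) (A *t (1%:M : 'M[C]_r)).
Proof.
move: A; apply: lin_ext2;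
  [exact: ampl_lin | exact: (lin_comp (subm_lin _ _) (lin_tl _)) |].
move=> i j p q; rewrite ampl_delta.
apply/matrixP => x y; case: (mxtens_indexP x) => a p'; case: (mxtens_indexP y) => b q'.
case: (mxtens_indexP a) => i' s'; case: (mxtens_indexP b) => j' t'.
rewrite tensmxE !mxE /h1r !mxtens_indexK /= ?tensmxE ?mxE ?mxtens_indexK /=.
by rewrite mulrAC.
Qed.

Lemma ch_t1r m r : channel (fun X : 'M[C]_m => X *t (1%:M : 'M[C]_r)).
Proof.
split; [exact: lin_tl | exact: tens11 |].
move=> k A pA; rewrite ampl_t1r.
by apply: psd_subm; apply: psd_tens1r.
Qed.

Lemma ch_t1l m r : channel (fun X : 'M[C]_m => (1%:M : 'M[C]_r) *t X).
Proof.
split; [exact: lin_tr | exact: tens11 |].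
move=> k A pA.
pose h := fun x : 'I_(r * m * k) =>
  idx ((unidx (unidx x).1).1, idx ((unidx (unidx x).1).2, (unidx x).2)).
have -> : ampl (fun X : 'M[C]_m => (1%:M : 'M[C]_r) *t X) k A
     = subm h h ((1%:M : 'M[C]_r) *t A).
  move: A {pA}; apply: lin_ext2;
    [exact: ampl_lin | exact: (lin_comp (subm_lin _ _) (lin_tr _)) |].
  move=> i j p q; rewrite ampl_delta.
  apply/matrixP => x y; case: (mxtens_indexP x) => a p'; case: (mxtens_indexP y) => b q'.
  case: (mxtens_indexP a) => s' i'; case: (mxtens_indexP b) => t' j'.
  rewrite tensmxE !mxE /h !mxtens_indexK /= ?tensmxE ?mxE ?mxtens_indexK /=.
  by rewrite mulrA.
by apply: psd_subm; apply: psd_tens1l.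
Qed.

End P2.

Section P3.
Variable R : realType.
Local Notation C := (complex R).
Local Notation idx := mxtens_index.
Local Notation unidx := mxtens_unindex.

Lemma sup_ge0 (E : set R) : (forall x, E x -> 0 <= x) -> 0 <= sup E.
Proof.
move=> H; have [hs|nh] := pselect (has_sup E); last by rewrite sup_out.
case: (hs) => -[x Ex] _; exact: le_trans (H _ Ex) (sup_upper_bound hs Ex).
Qed.

Lemma inf_ge0 (E : set R) : (forall x, E x -> 0 <= x) -> 0 <= inf E.
Proof.
move=> H; have [[x Ex]|E0] := pselect (E !=set0); first by apply: lb_le_inf => //; exists x.
have -> : E = set0 by apply/seteqP; split => x // Ex; apply: E0; exists x.
by rewrite inf0.
Qed.

Lemma inf_dom (A B : set R) : A !=set0 -> (forall x, A x -> exists2 y, B y & y <= x) ->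
  (forall y, B y -> 0 <= y) -> inf B <= inf A.
Proof.
move=> A0 H B0; apply: lb_le_inf => // x Ax.
have [y By yx] := H x Ax; apply: le_trans yx.
by apply: ge_inf => //; exists 0 => z Bz; exact: B0.
Qed.

Lemma vnorm_ge0 n (v : 'cV[C]_n) : 0 <= vnorm v.
Proof. exact: sqrtr_ge0. Qed.

Lemma opnorm_ge0 m n (A : 'M[C]_(m,n)) : 0 <= opnorm A.
Proof. by apply: sup_ge0 => x [v [_ ->]]; exact: vnorm_ge0. Qed.

Lemma cbnorm_ge0 a b (S : 'M[C]_a -> 'M[C]_b) : 0 <= cbnorm S.
Proof. by apply: sup_ge0 => x [k [A [_ ->]]]; exact: opnorm_ge0. Qed.

Definition Dset d1 d2 (T : 'M[C]_d2 -> 'M[C]_d1) (M : nat) : set R :=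
  [set r : R | exists (E : 'M[C]_d1 -> 'M[C]_M) (D : 'M[C]_M -> 'M[C]_d2),
          channel E /\ channel D /\
          r = cbnorm (fun A : 'M[C]_M => E (T (D A)) - A)].

Lemma DeltaE d1 d2 (T : 'M[C]_d2 -> 'M[C]_d1) M : Delta T M = inf (Dset T M).
Proof. by []. Qed.

Lemma Dset_ge0 d1 d2 (T : 'M[C]_d2 -> 'M[C]_d1) M x : Dset T M x -> 0 <= x.
Proof. by case=> E [D [_ [_ ->]]]; exact: cbnorm_ge0. Qed.

Lemma Delta_ge0 d1 d2 (T : 'M[C]_d2 -> 'M[C]_d1) M : 0 <= Delta T M.
Proof. by apply: inf_ge0; exact: Dset_ge0. Qed.

Lemma triv_ch a b : (0 < a)%N -> exists F : 'M[C]_a -> 'M[C]_b, channel F.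
Proof.
move=> a0; pose i0 := Ordinal a0.
pose g := fun i : 'I_b => idx (i0, i).
have ig : injective g by move=> x y /(can_inj (@mxtens_indexK _ _)) [].
by exists (fun X => subm g g (X *t (1%:M : 'M[C]_b))); apply: ch_comp;
  [exact: ch_subm | exact: ch_t1r].
Qed.

Lemma pdim_gt0 d n : (0 < d)%N -> (0 < pdim d n)%N.
Proof. by move=> d0; elim: n => //= n IH; rewrite muln_gt0 d0. Qed.

Lemma Dset_nonempty d1 d2 (T : 'M[C]_d2 -> 'M[C]_d1) M :
  (0 < d1)%N -> (0 < M)%N -> Dset T M !=set0.
Proof.
move=> d0 M0; have [E chE] := triv_ch M d0; have [D chD] := triv_ch d2 M0.
by exists (cbnorm (fun A : 'M[C]_M => E (T (D A)) - A)); exists E, D.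
Qed.

Lemma Dset_mono_n d1 d2 (T : 'M[C]_d2 -> 'M[C]_d1) n M :
  (0 < d1)%N -> channel T -> Dset (tpow T n) M `<=` Dset (tpow T n.+1) M.
Proof.
move=> d0 [lT uT _] r [E [D [chE [chD ->]]]].
pose i0 := Ordinal d0.
pose f := fun p : 'I_(pdim d1 n) => idx (i0, p).
have injf : injective f by move=> x y /(can_inj (@mxtens_indexK _ _)) [].
pose E' := fun Y : 'M[C]_(d1 * pdim d1 n) => E (subm f f Y).
pose D' := fun A : 'M[C]_M => (1%:M : 'M[C]_d2) *t D A.
exists E', D'; split; first by apply: ch_comp => //; exact: ch_subm.
split; first by apply: ch_comp => //; exact: ch_t1l.
congr (cbnorm _); apply: funext => A.
rewrite /E' /D' /=.
rewrite (tensmap_tens _ _ lT (@tpow_lin _ _ _ T n)) uT.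
congr (E _ - _); apply/matrixP => i j.
by rewrite !mxE /f ?tensmxE ?mxtens_indexK /= mul1r.
Qed.

Lemma Delta_mono_n d1 d2 (T : 'M[C]_d2 -> 'M[C]_d1) n n' M :
  (0 < d1)%N -> (0 < M)%N -> channel T -> (n <= n')%N ->
  Delta (tpow T n') M <= Delta (tpow T n) M.
Proof.
move=> d0 M0 chT; elim: n' => [|n' IH].
  by rewrite leqn0 => /eqP ->; rewrite lexx.
move=> H; have [->|nn] := eqVneq n n'.+1; first by rewrite lexx.
have {}IH : Delta (tpow T n') M <= Delta (tpow T n) M.
  by apply: IH; rewrite -ltnS ltn_neqAle nn H.
apply: (le_trans _ IH); rewrite !DeltaE; apply: inf_dom.
- by apply: Dset_nonempty => //; exact: pdim_gt0.
- by move=> x Sx; exists x; [exact: Dset_mono_n | exact: lexx].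
exact: Dset_ge0.
Qed.

Lemma Delta_d1_0 d2 (T : 'M[C]_d2 -> 'M[C]_0) n M :
  (0 < M)%N -> Delta (tpow T n.+1) M = 0.
Proof.
move=> M0; rewrite DeltaE.
have -> : Dset (tpow T n.+1) M = set0; last exact: inf0.
apply/seteqP; split => // r [E [D [[lE uE _] _]]].
have e1 : (1%:M : 'M[C]_(pdim 0 n.+1)) = 0.
  by apply/matrixP => -[i Hi]; exfalso; move: Hi; rewrite /= mul0n ltn0.
have := uE; rewrite e1 (lin0 lE) => /matrixP/(_ (Ordinal M0) (Ordinal M0)).
by rewrite !mxE eqxx /= => /esym/eqP; rewrite oner_eq0.
Qed.

End P3.

Section P4a.
Variable R : realType.
Local Notation C := (complex R).
Local Notation nc := (@Normc.normc R).

Lemma cs n (a b : 'I_n -> R) :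
  (\sum_i a i * b i) ^+ 2 <= (\sum_i a i ^+ 2) * (\sum_i b i ^+ 2).
Proof.
set A := \sum_i a i ^+ 2; set B := \sum_i b i ^+ 2; set S := \sum_i a i * b i.
have e1 : A * B = \sum_i \sum_j a i ^+ 2 * b j ^+ 2.
  by rewrite /A mulr_suml; apply: eq_bigr => i _; rewrite /B mulr_sumr.
have e2 : A * B = \sum_i \sum_j a j ^+ 2 * b i ^+ 2.
  by rewrite e1 exchange_big.
have e3 : S ^+ 2 = \sum_i \sum_j (a i * b i) * (a j * b j).
  by rewrite expr2 /S mulr_suml; apply: eq_bigr => i _; rewrite mulr_sumr.
have : 0 <= \sum_i \sum_j (a i * b j - a j * b i) ^+ 2.
  by apply: sumr_ge0 => i _; apply: sumr_ge0 => j _; exact: sqr_ge0.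
have -> : \sum_i \sum_j (a i * b j - a j * b i) ^+ 2 = A * B + A * B - S ^+ 2 *+ 2.
  rewrite {1}e1 e2 e3 -big_split -sumrMnl -sumrB; apply: eq_bigr => i _.
  rewrite -big_split -sumrMnl -sumrB; apply: eq_bigr => j _.
  rewrite mulr2n /=; ring.
move=> H; rewrite mulr2n in H; lra.
Qed.

Lemma nc_ge0 (z : C) : 0 <= nc z.
Proof. by case: z => a b; exact: sqrtr_ge0. Qed.

Lemma nc_sqr (z : C) : nc z ^+ 2 = complex.Re z ^+ 2 + complex.Im z ^+ 2.
Proof. by case: z => a b /=; rewrite sqr_sqrtr // addr_ge0 // sqr_ge0. Qed.

Lemma nc_sum I (r : seq I) (P : pred I) (F : I -> C) :
  nc (\sum_(i <- r | P i) F i) <= \sum_(i <- r | P i) nc (F i).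
Proof.
elim/big_rec2: _ => [|i y1 y2 _ H]; first by rewrite Normc.normc0.
by apply: le_trans (le_normcD _ _) _; rewrite lerD2l.
Qed.

Lemma nc_real (x : R) : nc (Complex x 0) = `|x|.
Proof. by rewrite /= expr0n addr0 sqrtr_sqr. Qed.

Lemma vnorm2E n (v : 'cV[C]_n) : vnorm2 v = \sum_i nc (v i 0) ^+ 2.
Proof. by apply: eq_bigr => i _; rewrite nc_sqr. Qed.

Lemma vnorm2_ge0 n (v : 'cV[C]_n) : 0 <= vnorm2 v.
Proof. by rewrite vnorm2E; apply: sumr_ge0 => i _; exact: sqr_ge0. Qed.

Lemma vnorm_sqr n (v : 'cV[C]_n) : vnorm v ^+ 2 = vnorm2 v.
Proof. by rewrite sqr_sqrtr // vnorm2_ge0. Qed.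

Lemma vnormD n (u w : 'cV[C]_n) : vnorm (u + w) <= vnorm u + vnorm w.
Proof.
rewrite -(ler_pXn2r (isT : (0 < 2)%N)) ?nnegrE ?addr_ge0 ?vnorm_ge0 //.
rewrite vnorm_sqr sqrrD !vnorm_sqr !vnorm2E.
have H : \sum_i nc ((u + w) i 0) ^+ 2 <=
         \sum_i (nc (u i 0) ^+ 2 + nc (u i 0) * nc (w i 0) *+ 2 + nc (w i 0) ^+ 2).
  apply: ler_sum => i _; rewrite -sqrrD lerXn2r ?nnegrE ?addr_ge0 ?nc_ge0 //.
  by rewrite mxE; exact: le_normcD.
apply: le_trans H _; rewrite !big_split /= lerD2r lerD2l -mulr2n lerMn2r /=.
have := cs (fun i => nc (u i 0)) (fun i => nc (w i 0)).
rewrite /= -!vnorm2E -!vnorm_sqr -exprMn => H2.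
rewrite -(ler_pXn2r (isT : (0 < 2)%N)) ?nnegrE ?mulr_ge0 ?vnorm_ge0 //.
by apply: sumr_ge0 => i _; rewrite mulr_ge0 ?nc_ge0.
Qed.


Lemma vnorm0 n : vnorm (0 : 'cV[C]_n) = 0.
Proof.
rewrite /vnorm /vnorm2 big1 ?sqrtr0 // => i _.
by rewrite mxE /= expr0n /= addr0.
Qed.

Lemma vnormZ n c (v : 'cV[C]_n) : vnorm (c *: v) = nc c * vnorm v.
Proof.
rewrite /vnorm vnorm2E.
have -> : \sum_i nc ((c *: v) i 0) ^+ 2 = nc c ^+ 2 * \sum_i nc (v i 0) ^+ 2.
  by rewrite mulr_sumr; apply: eq_bigr => i _; rewrite mxE Normc.normcM exprMn.
rewrite sqrtrM ?sqr_ge0 // sqrtr_sqr ger0_norm ?nc_ge0 //.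
by rewrite -vnorm2E.
Qed.

Lemma vnorm_eq0 n (v : 'cV[C]_n) : vnorm v = 0 -> v = 0.
Proof.
move/eqP; rewrite sqrtr_eq0 => H.
have H0 : vnorm2 v = 0 by apply/eqP; rewrite eq_le H vnorm2_ge0.
move: H0; rewrite vnorm2E => /eqP; rewrite psumr_eq0 => [/allP Hall|i _]; last exact: sqr_ge0.
apply/matrixP => i j; rewrite [j]ord1 mxE.
have := Hall i (mem_index_enum _); rewrite /= sqrf_eq0 => /eqP.
exact: Normc.eq0_normc.
Qed.

Lemma nc_entry_le n (v : 'cV[C]_n) i : nc (v i 0) <= vnorm v.
Proof.
rewrite -(ler_pXn2r (isT : (0 < 2)%N)) ?nnegrE ?nc_ge0 ?vnorm_ge0 //.
rewrite vnorm_sqr vnorm2E (bigD1 i) //= lerDl.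
by apply: sumr_ge0 => j _; exact: sqr_ge0.
Qed.

Lemma vnorm_sum I (r : seq I) (P : pred I) n (F : I -> 'cV[C]_n) :
  vnorm (\sum_(i <- r | P i) F i) <= \sum_(i <- r | P i) vnorm (F i).
Proof.
elim/big_rec2: _ => [|i y1 y2 _ H]; first by rewrite vnorm0.
by apply: le_trans (vnormD _ _) _; rewrite lerD2l.
Qed.

Lemma vnorm_delta n (i : 'I_n) : vnorm (delta_mx i 0 : 'cV[C]_n) = 1.
Proof.
rewrite /vnorm vnorm2E (bigD1 i) //= big1 ?addr0.
  by rewrite mxE !eqxx /= expr1n expr0n addr0 sqrtr1 expr1n sqrtr1.
by move=> j nj; rewrite mxE (negbTE nj) /= expr0n addr0 sqrtr0 expr0n.
Qed.

Lemma vnorm_le_sum n (v : 'cV[C]_n) : vnorm v <= \sum_i nc (v i 0).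
Proof.
have ev : v = \sum_i v i 0 *: delta_mx i 0.
  rewrite {1}(matrix_sum_delta v); apply: eq_bigr => i _; by rewrite big_ord1.
rewrite {1}ev; apply: le_trans (vnorm_sum _ _ _) _; apply: ler_sum => i _.
by rewrite vnormZ vnorm_delta mulr1.
Qed.

Lemma mulmx_bnd m n (A : 'M[C]_(m,n)) (v : 'cV[C]_n) :
  vnorm (A *m v) <= (\sum_i \sum_j nc (A i j)) * vnorm v.
Proof.
apply: le_trans (vnorm_le_sum _) _; rewrite mulr_suml; apply: ler_sum => i _.
rewrite mxE mulr_suml; apply: le_trans (nc_sum _ _ _) _; apply: ler_sum => j _.
by rewrite Normc.normcM ler_wpM2l ?nc_ge0 ?nc_entry_le.
Qed.

Definition opset m n (A : 'M[C]_(m,n)) : set R :=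
  [set r : R | exists v : 'cV[C]_n, vnorm v <= 1 /\ r = vnorm (A *m v)].

Lemma opset_sup m n (A : 'M[C]_(m,n)) : has_sup (opset A).
Proof.
split; first by exists 0, 0; rewrite vnorm0 ler01 mulmx0 vnorm0.
exists (\sum_i \sum_j nc (A i j)) => r [v [v1 ->]].
apply: le_trans (mulmx_bnd _ _) _; rewrite ler_piMr //.
by apply: sumr_ge0 => i _; apply: sumr_ge0 => j _; exact: nc_ge0.
Qed.

Lemma opnorm_ub m n (A : 'M[C]_(m,n)) v : vnorm v <= 1 -> vnorm (A *m v) <= opnorm A.
Proof. by move=> v1; apply: (sup_upper_bound (opset_sup A)); exists v. Qed.

Lemma opnorm_mul m n (A : 'M[C]_(m,n)) v : vnorm (A *m v) <= opnorm A * vnorm v.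
Proof.
have [v0|v0] := eqVneq (vnorm v) 0.
  by rewrite (vnorm_eq0 v0) mulmx0 vnorm0 mulr0 vnorm0.
have vp : 0 < vnorm v by rewrite lt_def v0 vnorm_ge0.
pose c : C := Complex (vnorm v)^-1 0.
have nc_c : nc c = (vnorm v)^-1 by rewrite nc_real ger0_norm // invr_ge0 vnorm_ge0.
have := opnorm_ub A (v := c *: v).
rewrite vnormZ nc_c mulVf // lexx -scalemxAr vnormZ nc_c => /(_ isT) H.
by rewrite -ler_pdivrMr // mulrC.
Qed.

Lemma opnorm_le m n (A : 'M[C]_(m,n)) c :
  0 <= c -> (forall v, vnorm (A *m v) <= c * vnorm v) -> opnorm A <= c.
Proof.
move=> c0 H; apply: ge_sup; first by exists 0, 0; rewrite vnorm0 ler01 mulmx0 vnorm0.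
by move=> r [v [v1 ->]]; apply: le_trans (H v) _; rewrite ler_piMr.
Qed.

End P4a.

Section P4b.
Variable R : realType.
Local Notation C := (complex R).
Local Notation nc := (@Normc.normc R).
Local Notation idx := mxtens_index.

Lemma opnorm0 m n : opnorm (0 : 'M[C]_(m,n)) <= 0.
Proof. by apply: opnorm_le => // v; rewrite mul0mx vnorm0 mul0r. Qed.

Lemma opnormD m n (A B : 'M[C]_(m,n)) : opnorm (A + B) <= opnorm A + opnorm B.
Proof.
apply: opnorm_le; first by rewrite addr_ge0 ?opnorm_ge0.
move=> v; rewrite mulmxDl mulrDl; apply: le_trans (vnormD _ _) _.
by rewrite lerD ?opnorm_mul.
Qed.

Lemma opnorm_sum I (r : seq I) (P : pred I) m n (F : I -> 'M[C]_(m,n)) :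
  opnorm (\sum_(i <- r | P i) F i) <= \sum_(i <- r | P i) opnorm (F i).
Proof.
elim/big_rec2: _ => [|i y1 y2 _ H]; first exact: opnorm0.
by apply: le_trans (opnormD _ _) _; rewrite lerD2l.
Qed.

Lemma opnorm_mulmx m n p (A : 'M[C]_(m,n)) (B : 'M[C]_(n,p)) :
  opnorm (A *m B) <= opnorm A * opnorm B.
Proof.
apply: opnorm_le; first by rewrite mulr_ge0 ?opnorm_ge0.
move=> v; rewrite -mulmxA; apply: le_trans (opnorm_mul _ _) _.
by rewrite -mulrA ler_wpM2l ?opnorm_ge0 ?opnorm_mul.
Qed.

Lemma sum_inj_le m n (f : 'I_m -> 'I_n) (h : 'I_n -> R) :
  injective f -> (forall j, 0 <= h j) -> \sum_i h (f i) <= \sum_j h j.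
Proof.
move=> injf h0; rewrite (bigID (mem (f @: [set: _])%SET)) /=.
rewrite big_imset /=; last by move=> x y _ _; exact: injf.

rewrite [X in _ <= X + _](eq_bigl xpredT) => [|i]; last by rewrite inE.
by rewrite /= lerDl; apply: sumr_ge0.
Qed.

Lemma sum_ext (V : nmodType) m n (g : 'I_m -> 'I_n) (h : 'I_n -> V) :
  injective g -> (forall j, (forall i, g i != j) -> h j = 0) ->
  \sum_j h j = \sum_i h (g i).
Proof.
move=> injg h0; rewrite (bigID (mem (g @: [set: _])%SET)) /=.
rewrite big_imset /=; last by move=> x y _ _; exact: injg.
rewrite [X in X + _ = _](eq_bigl xpredT) => [|i]; last by rewrite inE.
rewrite [X in _ + X = _]big1 ?addr0 //.
move=> j nj; apply: h0 => i; apply: contra nj => /eqP <-.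
by apply: imset_f.
Qed.

Definition ext m n (g : 'I_m -> 'I_n) (u : 'cV[C]_m) : 'cV[C]_n :=
  \col_j (if [pick i | g i == j] is Some i then u i 0 else 0).

Lemma ext_at m n (g : 'I_m -> 'I_n) u i : injective g -> ext g u (g i) 0 = u i 0.
Proof.
move=> injg; rewrite mxE; case: pickP => [i' /eqP /injg -> //|/(_ i)].
by rewrite eqxx.
Qed.

Lemma ext_out m n (g : 'I_m -> 'I_n) u j : (forall i, g i != j) -> ext g u j 0 = 0.
Proof. by move=> H; rewrite mxE; case: pickP => [i' e|//]; rewrite (negbTE (H i')) in e. Qed.

Lemma vnorm_ext m n (g : 'I_m -> 'I_n) u : injective g -> vnorm (ext g u) = vnorm u.
Proof.
move=> injg; rewrite /vnorm !vnorm2E; congr Num.sqrt.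
rewrite (sum_ext (h := fun j => nc (ext g u j 0) ^+ 2) injg).
  by apply: eq_bigr => i _; rewrite ext_at.
by move=> j H; rewrite ext_out // Normc.normc0 expr0n.
Qed.

Lemma sq_le (x y : R) : 0 <= x -> x <= y -> x ^+ 2 <= y ^+ 2.
Proof. by move=> x0 xy; rewrite lerXn2r ?nnegrE // (le_trans x0 xy). Qed.

Lemma le_sq (x y : R) : 0 <= y -> x ^+ 2 <= y ^+ 2 -> x <= y.
Proof.
move=> y0 H; have [x0|x0] := leP 0 x; first by rewrite -(ler_pXn2r (isT : (0 < 2)%N)) ?nnegrE.
by apply: le_trans (ltW x0) y0.
Qed.

Lemma vnorm_restr m n (f : 'I_m -> 'I_n) (v : 'cV[C]_n) :
  injective f -> vnorm (subm f id v) <= vnorm v.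
Proof.
move=> injf; apply: le_sq; first exact: vnorm_ge0.
rewrite !vnorm_sqr !vnorm2E.
have -> : \sum_i nc (subm f id v i 0) ^+ 2 = \sum_i nc (v (f i) 0) ^+ 2.
  by apply: eq_bigr => i _; rewrite mxE.
by apply: (sum_inj_le (h := fun j => nc (v j 0) ^+ 2)) => // j; exact: sqr_ge0.
Qed.

Lemma subm_mul m n p q (f : 'I_m -> 'I_p) (g : 'I_n -> 'I_q) (X : 'M[C]_(p,q)) u :
  injective g -> subm f g X *m u = subm f id (X *m ext g u).
Proof.
move=> injg; apply/matrixP => i j; rewrite !mxE [j]ord1.
rewrite (sum_ext (h := fun k => X (f i) k * ext g u k 0) injg).
  by apply: eq_bigr => k _; rewrite ext_at // mxE.
by move=> k H; rewrite ext_out // mulr0.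
Qed.

Lemma opnorm_subm m n p q (f : 'I_m -> 'I_p) (g : 'I_n -> 'I_q) (X : 'M[C]_(p,q)) :
  injective f -> injective g -> opnorm (subm f g X) <= opnorm X.
Proof.
move=> injf injg; apply: opnorm_le; first exact: opnorm_ge0.
move=> u; rewrite subm_mul //; apply: le_trans (vnorm_restr _ injf) _.
by rewrite -(vnorm_ext u injg); exact: opnorm_mul.
Qed.

End P4b.

Section P4c.
Variable R : realType.
Local Notation C := (complex R).
Local Notation nc := (@Normc.normc R).
Local Notation idx := mxtens_index.
Local Notation unidx := mxtens_unindex.

Lemma opnorm_t1r m n r (A : 'M[C]_(m,n)) : opnorm (A *t (1%:M : 'M[C]_r)) <= opnorm A.
Proof.
apply: opnorm_le; first exact: opnorm_ge0.
move=> v.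
pose vs (s : 'I_r) : 'cV[C]_n := subm (fun j : 'I_n => idx (j, s)) id v.
have e : forall i s, ((A *t (1%:M : 'M[C]_r)) *m v) (idx (i, s)) 0 = (A *m vs s) i 0.
  move=> i s; rewrite [LHS]mxE [RHS]mxE sum_tens; apply: eq_bigr => j _.
  rewrite (bigD1 s) //= [\sum_(_ < _ | _ != _) _]big1 ?addr0.
    by rewrite tensmxE [_ s s]mxE eqxx mulr1 /vs mxE.
  by move=> t ts; rewrite tensmxE [_ s t]mxE eq_sym (negbTE ts) mulr0 mul0r.
have L : vnorm2 ((A *t (1%:M : 'M[C]_r)) *m v) = \sum_s vnorm2 (A *m vs s).
  rewrite vnorm2E sum_tens exchange_big; apply: eq_bigr => s _.
  by rewrite vnorm2E; apply: eq_bigr => i _; rewrite e.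
have Rr : vnorm2 v = \sum_s vnorm2 (vs s).
  rewrite vnorm2E sum_tens exchange_big; apply: eq_bigr => s _.
  by rewrite vnorm2E; apply: eq_bigr => j _; rewrite mxE.
apply: le_sq; first by rewrite mulr_ge0 ?opnorm_ge0 ?vnorm_ge0.
rewrite exprMn !vnorm_sqr L Rr mulr_sumr; apply: ler_sum => s _.
rewrite -!vnorm_sqr -exprMn; exact: sq_le (vnorm_ge0 _) (opnorm_mul _ _).
Qed.

Definition swp m n (x : 'I_(m * n)) : 'I_(n * m) := idx ((unidx x).2, (unidx x).1).

Lemma swp_inj m n : injective (@swp m n).
Proof.
move=> x y; case: (mxtens_indexP x) => i p; case: (mxtens_indexP y) => j q.
rewrite /swp !mxtens_indexK /= => /eqP; rewrite idx_eq xpair_eqE.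
by case/andP => /eqP -> /eqP ->.
Qed.

Lemma opnorm_t1l m n r (A : 'M[C]_(m,n)) : opnorm ((1%:M : 'M[C]_r) *t A) <= opnorm A.
Proof.
have -> : (1%:M : 'M[C]_r) *t A = subm (@swp r m) (@swp r n) (A *t (1%:M : 'M[C]_r)).
  apply/matrixP => x y; case: (mxtens_indexP x) => i p; case: (mxtens_indexP y) => j q.
  by rewrite [RHS]mxE /swp !mxtens_indexK /= !tensmxE mulrC.
apply: le_trans (opnorm_subm _ (@swp_inj _ _) (@swp_inj _ _)) _.
exact: opnorm_t1r.
Qed.

Lemma opnorm_tens m n p q (X : 'M[C]_(m,n)) (Y : 'M[C]_(p,q)) :
  opnorm (X *t Y) <= opnorm X * opnorm Y.
Proof.
have -> : X *t Y = (X *t (1%:M : 'M[C]_p)) *m ((1%:M : 'M[C]_n) *t Y).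
  by rewrite tensmx_mul mulmx1 mul1mx.
apply: le_trans (opnorm_mulmx _ _) _.
by apply: ler_pM; rewrite ?opnorm_ge0 ?opnorm_t1r ?opnorm_t1l.
Qed.

Lemma idxl_inj m n (i : 'I_m) : injective (fun p : 'I_n => idx (i, p)).
Proof. by move=> x y /eqP; rewrite idx_eq xpair_eqE eqxx => /eqP. Qed.

Lemma ampl_blocks a b (S : 'M[C]_a -> 'M[C]_b) k A : linear S ->
  ampl S k A = \sum_i \sum_j S (delta_mx i j) *t
     subm (fun p : 'I_k => idx (i, p)) (fun q : 'I_k => idx (j, q)) A.
Proof.
move=> lS; move: A; apply: lin_ext2; first exact: ampl_lin.
  move=> c A B; rewrite scaler_sumr -big_split; apply: eq_bigr => i _.
  rewrite scaler_sumr -big_split; apply: eq_bigr => j _.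
  by rewrite subm_lin tensmxDr tensmxZr.
move=> i' j' p q; rewrite ampl_delta.
have H : forall i j : 'I_a, subm (fun p0 : 'I_k => idx (i, p0)) (fun q0 : 'I_k => idx (j, q0))
     (delta_mx i' j' *t delta_mx p q) = ((i == i') && (j == j'))%:R *: (delta_mx p q : 'M[C]_k).
  move=> i j; apply/matrixP => x y; rewrite [LHS]mxE tensmxE !mxE.
  by case: (i == i'); case: (j == j'); rewrite /= ?mul1r ?mul0r.
rewrite (bigD1 i') //= [\sum_(_ < _ | _ != _) _]big1 ?addr0; last first.
  move=> i ni; apply: big1 => j _; rewrite H (negbTE ni) /= scale0r.
  exact: tensmx0.
rewrite (bigD1 j') //= [\sum_(_ < _ | _ != _) _]big1 ?addr0; last first.
  move=> j nj; rewrite H (negbTE nj) andbF /= scale0r.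
  exact: tensmx0.
by rewrite H !eqxx /= scale1r.
Qed.

Lemma cb_bnd a b (S : 'M[C]_a -> 'M[C]_b) k A : linear S ->
  opnorm (ampl S k A) <= (\sum_i \sum_j opnorm (S (delta_mx i j))) * opnorm A.
Proof.
move=> lS; rewrite ampl_blocks //; apply: le_trans (opnorm_sum _ _ _) _.
rewrite mulr_suml; apply: ler_sum => i _; apply: le_trans (opnorm_sum _ _ _) _.
rewrite mulr_suml; apply: ler_sum => j _; apply: le_trans (opnorm_tens _ _) _.
by rewrite ler_wpM2l ?opnorm_ge0 // opnorm_subm //; exact: idxl_inj.
Qed.

End P4c.

Section P5.
Variable R : realType.
Local Notation C := (complex R).
Local Notation idx := mxtens_index.
Local Notation unidx := mxtens_unindex.

Definition cbset a b (S : 'M[C]_a -> 'M[C]_b) : set R :=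
  [set r : R | exists (k : nat) (A : 'M[C]_(a * k.+1)),
                     opnorm A <= 1 /\ r = opnorm (ampl S k.+1 A)].

Lemma cbset_sup a b (S : 'M[C]_a -> 'M[C]_b) : linear S -> has_sup (cbset S).
Proof.
move=> lS; split.
  exists (opnorm (ampl S 1 0)), 0%N, 0; split => //.
  apply: (le_trans (opnorm0 _ _ _)); exact: ler01.
exists (\sum_i \sum_j opnorm (S (delta_mx i j))) => r [k [A [A1 ->]]].
apply: le_trans (cb_bnd _ lS) _; rewrite ler_piMr //.
  by apply: sumr_ge0 => i _; apply: sumr_ge0 => j _; exact: opnorm_ge0.
Qed.

Lemma cbnorm_ub a b (S : 'M[C]_a -> 'M[C]_b) k (A : 'M[C]_(a * k.+1)) :
  linear S -> opnorm A <= 1 -> opnorm (ampl S k.+1 A) <= cbnorm S.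
Proof. by move=> lS A1; apply: (sup_upper_bound (cbset_sup lS)); exists k, A. Qed.

Lemma lin_sub m n p q (F G : 'M[C]_(m,n) -> 'M[C]_(p,q)) :
  linear F -> linear G -> linear (fun x => F x - G x).
Proof.
move=> lF lG c x y; rewrite (linD lF) (linD lG) (linZ lF) (linZ lG).
by rewrite scalerBr addrACA opprD.
Qed.

Lemma Dset_mono_M d1 d2 (T : 'M[C]_d2 -> 'M[C]_d1) K M : linear T ->
  (0 < K)%N -> (K <= M)%N -> forall r, Dset T M r -> exists2 r', Dset T K r' & r' <= r.
Proof.
move=> lT K0 KM r [E [D [chE [chD ->]]]].
have [lE _ _] := chE; have [lD _ _] := chD.
pose w := fun i : 'I_K => widen_ord KM i.
have injw : injective w by move=> x y /(congr1 val) /= /val_inj.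
pose m0 : 'I_M := Ordinal (leq_trans K0 KM).
pose k0 : 'I_K := Ordinal K0.
pose g := fun i : 'I_M =>
  if (insub (val i) : option 'I_K) is Some i' then idx (i', m0) else idx (k0, i).
have injg : injective g.
  move=> x y; rewrite /g; case: insubP => [x' xK ex|nx]; case: insubP => [y' yK ey|ny];
    move/eqP; rewrite idx_eq xpair_eqE.
  - by case/andP => /eqP exy _; apply: val_inj; rewrite -ex -ey exy.
  - by case/andP => _ /eqP ey; move: ny; rewrite -ey /= K0.
  - by case/andP => _ /eqP ex; move: nx; rewrite ex /= K0.
  - by case/andP => _ /eqP.
pose Phi := fun A : 'M[C]_K => subm g g (A *t (1%:M : 'M[C]_M)).
have gw : forall i, g (w i) = idx (i, m0) by move=> i; rewrite /g /= valK.
have PhiK : forall A, subm w w (Phi A) = A.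
  by move=> A; apply/matrixP => i j; rewrite [LHS]mxE [LHS]mxE !gw tensmxE !mxE eqxx mulr1.
have chPhi : channel Phi by apply: ch_comp; [exact: ch_subm | exact: ch_t1r].
have [lPhi _ _] := chPhi.
pose E2 := fun X => subm w w (E X).
pose D2 := fun A => D (Phi A).
exists (cbnorm (fun A : 'M[C]_K => E2 (T (D2 A)) - A)).
  exists E2, D2; split; first by apply: ch_comp => //; exact: ch_subm.
  by split => //; exact: ch_comp.
pose Psi := fun X : 'M[C]_M => E (T (D X)) - X.
have lPsi : linear Psi.
  by apply: lin_sub; [apply: lin_comp => //; apply: lin_comp | exact: lin_id].
have -> : (fun A : 'M[C]_K => E2 (T (D2 A)) - A) = (fun A => subm w w (Psi (Phi A))).
  apply: funext => A; rewrite /E2 /D2 /Psi (linB (subm_lin w w)) PhiK //.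
apply: ge_sup; first by exists (opnorm (ampl (fun A : 'M[C]_K => subm w w (Psi (Phi A))) 1 0)), 0%N, 0;
  split => //; apply: (le_trans (opnorm0 _ _ _)); exact: ler01.
move=> x [k [A [A1 ->]]].
rewrite ampl_comp; last exact: subm_lin.
rewrite ampl_comp // ampl_subm.
apply: le_trans (opnorm_subm _ (fdx_inj injw) (fdx_inj injw)) _.
apply: cbnorm_ub => //.
rewrite /Phi ampl_comp; last exact: subm_lin.
rewrite ampl_subm ampl_t1r.
apply: le_trans (opnorm_subm _ (fdx_inj injg) (fdx_inj injg)) _.
apply: le_trans (opnorm_subm _ (@h1r_inj _ _ _) (@h1r_inj _ _ _)) _.
exact: le_trans (opnorm_t1r _ _) A1.
Qed.

Lemma Delta_mono d1 d2 (T : 'M[C]_d2 -> 'M[C]_d1) n n' K M : channel T ->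
  (0 < n)%N -> (n <= n')%N -> (0 < K)%N -> (K <= M)%N ->
  Delta (tpow T n') K <= Delta (tpow T n) M.
Proof.
case: d1 T => [|d1] T chT n0 nn' K0 KM.
  case: n' nn' => [|n'] nn'; first by move: (leq_trans n0 nn').
  by rewrite Delta_d1_0 //; exact: Delta_ge0.
have M0 : (0 < M)%N := leq_trans K0 KM.
apply: le_trans (Delta_mono_n _ M0 chT nn') => //.
rewrite !DeltaE; apply: inf_dom.
- by apply: Dset_nonempty => //; exact: pdim_gt0.
- by apply: Dset_mono_M => //; exact: tpow_lin.
- exact: Dset_ge0.
Qed.

End P5.

Section P6.
Variable R : realType.

Lemma near_oo (P : nat -> Prop) : (\forall k \near \oo, P k) -> exists N, forall k, (N <= k)%N -> P k.
Proof. by case=> N _ HN; exists N => k Nk; apply: HN. Qed.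
Lemma oo_near (P : nat -> Prop) N : (forall k, (N <= k)%N -> P k) -> \forall k \near \oo, P k.
Proof. by move=> H; exists N. Qed.

Lemma liminfE (u : (\bar R)^nat) : limn_einf u = ereal_sup (range (einfs u)).
Proof. by rewrite limn_einf_lim; apply/cvg_lim => //; exact: cvg_einfs_sup. Qed.

Lemma liminf_gt (u : (\bar R)^nat) (x : \bar R) :
  (x < limn_einf u)%E -> exists N, forall k, (N <= k)%N -> (x < u k)%E.
Proof.
rewrite liminfE => /ereal_sup_gt [_ [N _ <-] xN]; exists N => k Nk.
by apply: (lt_le_trans xN); apply: ereal_inf_lbound; exists k.
Qed.

Lemma liminf_ge (u : (\bar R)^nat) (y : \bar R) N :
  (forall k, (N <= k)%N -> (y <= u k)%E) -> (y <= limn_einf u)%E.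
Proof.
move=> H; rewrite liminfE; apply: le_ereal_sup_tmp; exists (einfs u N); first by exists N.
by apply: le_ereal_inf_tmp => _ [k Nk <-]; exact: H.
Qed.

Lemma cover_idx (n : nat -> nat) : (forall a, (n a < n a.+1)%N) ->
  forall A m, (n A <= m)%N -> exists a, [/\ (A <= a)%N, (n a <= m)%N & (m < n a.+1)%N].
Proof.
move=> ninc A m HA.
have ge : forall a, (a <= n a)%N.
  by elim=> // a IH; apply: leq_ltn_trans IH (ninc a).
have exP : exists i, (fun a => (n a <= m)%N) i by exists A.
have ubP : forall i, (fun a => (n a <= m)%N) i -> (i <= m)%N.
  by move=> i /= Hi; apply: leq_trans (ge i) Hi.
case: (ex_maxnP exP ubP) => a Pa maxa; exists a; split => //; first exact: maxa.
by rewrite ltnNge; apply/negP => /maxa; rewrite ltnn.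
Qed.

Lemma pow2E (x : R) : (2 : R) `^ x = expR (x * ln 2).
Proof. by rewrite /powR pnatr_eq0. Qed.

Lemma ln2_gt0 : 0 < ln (2 : R).
Proof. by apply: ln_gt0; rewrite ltr1n. Qed.

End P6.

Unset Implicit Arguments. Set Strict Implicit. Set Printing Implicit Defensive.

Theorem lemma1 (R : realType) (d1 d2 : nat) (T : 'M[complex R]_d2 -> 'M[complex R]_d1)
  (n : nat -> nat) (M : nat -> nat) :
  channel T ->
  (forall a, (0 < n a)%N) ->
  (forall a, (n a < n a.+1)%N) ->
  (fun a => (n a.+1)%:R / (n a)%:R : R) @ \oo --> (1 : R) ->
  (forall a, (0 < M a)%N) ->
  (fun a => Delta (tpow T (n a)) (M a)) @ \oo --> (0 : R) ->
  (forall c : R, 0 <= c ->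
     (c%:E < limn_einf (fun a => ((ln ((M a)%:R : R) / ln 2) / (n a)%:R)%:E))%E ->
     achievable T c)
  /\
  (forall mu lam : R, 0 <= mu -> 0 <= lam ->
     (forall a, Delta (tpow T (n a)) (M a) <= mu * expR (- lam * (n a)%:R)) ->
     forall c : R, 0 <= c ->
     (c%:E < limn_einf (fun a => ((ln ((M a)%:R : R) / ln 2) / (n a)%:R)%:E))%E ->
     (lam%:E <= limn_einf (err_exponent_seq T c))%E).
Proof.
move=> chT npos ninc ratio Mpos conv.
set u := (fun a => _) in conv |- *.
set lu := limn_einf _.
pose K (c : R) (m : nat) := Num.truncn ((2 : R) `^ (c * m%:R)).
have Kpos : forall c m, 0 <= c -> (0 < K c m)%N.
  move=> c m c0; rewrite /K truncn_ge_nat ?powR_ge0 // pow2E.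
  apply: le_trans (expR_ge1Dx _); rewrite lerDl mulr_ge0 ?mulr_ge0 //.
  exact: ltW (ln2_gt0 R).
have rate : forall c : R, 0 <= c -> (c%:E < lu)%E ->
    exists A1, forall a m, (A1 <= a)%N -> (m < n a.+1)%N -> (K c m <= M a)%N.
  move=> c c0 cl.
  have [c' cc' c'l] : exists2 c' : R, c < c' & (c'%:E < lu)%E.
    move: cl; case: lu => [l| |] //= cl.
    - rewrite lte_fin in cl; by exists ((c + l) / 2); [lra | rewrite lte_fin; lra].
    - by exists (c + 1); [lra | exact: ltry].
  have [N1 HN1] := liminf_gt c'l.
  have [N2 HN2] : exists N2, forall a, (N2 <= a)%N -> c * (n a.+1)%:R <= c' * (n a)%:R.
    have [->|cpos] := eqVneq c 0.
      by exists 0%N => a _; rewrite mul0r mulr_ge0 //; lra.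
    have cp : 0 < c by rewrite lt_def cpos c0.
    have := cvgr_lt _ ratio (c' / c); rewrite ltr_pdivlMr // mul1r => /(_ _ cc').
    case/near_oo => N2 HN2; exists N2 => a /HN2.
    have na0 : (0 : R) < (n a)%:R by rewrite ltr0n.
    rewrite ltr_pdivrMr // => H.
    have : c * (n a.+1)%:R < c * (c' / c * (n a)%:R) by rewrite ltr_pM2l.
    by rewrite mulrA mulrCA divff ?mulr1 //; move/ltW.
  exists (maxn N1 N2) => a m; rewrite geq_max => /andP[a1 a2] ma.
  have := HN1 _ a1; rewrite /u lte_fin.
  have na0 : (0 : R) < (n a)%:R by rewrite ltr0n.
  rewrite ltr_pdivlMr // ltr_pdivlMr ?ln2_gt0 // => H1.
  have H2 := HN2 _ a2.
  have H3 : c * m%:R <= c * (n a.+1)%:R by rewrite ler_wpM2l // ler_nat ltnW.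
  have H4 : c * m%:R * ln 2 < ln (M a)%:R.
    have l2 := ln2_gt0 R.
    have : c * m%:R * ln 2 <= c' * (n a)%:R * ln 2 by apply: ler_wpM2r; [exact: ltW | lra].
    by move=> H5; apply: le_lt_trans H5 H1.
  rewrite /K truncn_le_nat pow2E.
  have Mp : (0 : R) < (M a)%:R by rewrite ltr0n.
  apply: lt_trans (_ : (M a)%:R < _); last by rewrite ltr_nat.
  by rewrite -[X in _ < X](lnK (x := (M a)%:R)) ?posrE // ltr_expR.
split.
  move=> c c0 cl; have [A1 HA1] := rate c c0 cl.
  apply/cvgrPdist_lt => e e0.
  have := conv; move/cvgrPdist_lt => /(_ e e0) /near_oo [A2 HA2].
  apply: (oo_near (N := n (maxn A1 A2))) => m Hm.
  have [a [Aa nam mna]] := cover_idx ninc Hm.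
  move: Aa; rewrite geq_max => /andP[a1 a2].
  have HD : Delta (tpow T m) (K c m) <= u a.
    by apply: Delta_mono => //; [exact: Kpos | exact: HA1].
  have d0 := Delta_ge0 (tpow T m) (K c m).
  have ua0 : 0 <= u a by exact: Delta_ge0.
  rewrite sub0r normrN ger0_norm //; apply: le_lt_trans HD _.
  by have := HA2 _ a2; rewrite sub0r normrN ger0_norm.
move=> mu lam mu0 lam0 Hmu c c0 cl.
have [A1 HA1] := rate c c0 cl.
set err := err_exponent_seq T c.
have H : forall e, 0 < e -> ((lam - e)%:E <= limn_einf err)%E.
  move=> e e0.
  pose eta := e / (lam + 1).
  have eta0 : 0 < eta by rewrite divr_gt0 //; lra.
  have ee : e = eta * (lam + 1) by rewrite /eta divfK //; lra.
  have := cvgr_lt _ ratio (1 + eta) => /(_ _ _) /near_oo.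
  case; first by lra.
  move=> N3 HN3.
  pose N4 := (Num.truncn (`|ln mu| / eta)).+1.
  apply: (liminf_ge (N := maxn (n (maxn A1 N3)) N4)) => m.
  rewrite geq_max => /andP[Hm Hm4].
  have [a [Aa nam mna]] := cover_idx ninc Hm.
  move: Aa; rewrite geq_max => /andP[a1 a3].
  rewrite /err /err_exponent_seq.
  set x := Delta _ _.
  have x0 : 0 <= x by exact: Delta_ge0.
  case: eqP => [_|xn0]; first exact: leey.
  have xp : 0 < x by rewrite lt_def x0 andbT; apply/eqP.
  have HD : x <= u a by apply: Delta_mono => //; [exact: Kpos | exact: HA1].
  have Hy := Hmu a.
  have ey : 0 < expR (- lam * (n a)%:R) := expR_gt0 _.
  have mup : 0 < mu.
    rewrite lt_def mu0 andbT; apply/eqP => mu_0; move: Hy; rewrite mu_0 mul0r => Hy.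
    have : u a <= 0 by []. lra.
  have lnx : ln x <= ln mu - lam * (n a)%:R.
    have : x <= mu * expR (- lam * (n a)%:R) by apply: le_trans HD Hy.
    rewrite -ler_ln ?posrE ?mulr_gt0 // lnM ?posrE // expRK; lra.
  have na0 : (0 : R) < (n a)%:R by rewrite ltr0n.
  have mpos : (0 : R) < m%:R.
    by rewrite ltr0n; apply: leq_trans (npos (maxn A1 N3)) Hm.
  have ratio_a : (n a.+1)%:R < (1 + eta) * (n a)%:R.
    by have := HN3 _ a3; rewrite ltr_pdivrMr.
  have m_lt : m%:R < (1 + eta) * (n a)%:R.
    by apply: lt_trans ratio_a; rewrite ltr_nat.
  have lnmu : ln mu <= eta * m%:R.
    have t1 := truncnS_gt (`|ln mu| / eta).
    have t2 : ((Num.truncn (`|ln mu| / eta)).+1%:R <= (m%:R : R)) by rewrite ler_nat.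
    have t3 : `|ln mu| / eta < m%:R by apply: lt_le_trans t2.
    move: t3; rewrite ltr_pdivrMr // => t3.
    apply: le_trans (ler_norm _) _; rewrite mulrC; exact: ltW.
  rewrite lee_fin ler_pdivlMr //.
  have key0 : 0 <= (1 + eta) * ((n a)%:R - m%:R + eta * m%:R) by nra.
  have key : 0 <= (n a)%:R - m%:R + eta * m%:R.
    by rewrite -(pmulr_rge0 _ (_ : 0 < 1 + eta)) //; lra.
  have := mulr_ge0 lam0 key.
  rewrite ee; nra.
case E: (limn_einf err) => [l| |].
- rewrite lee_fin; apply/ler_addgt0Pr => e e0; have := H e e0; rewrite E lee_fin; lra.
- exact: leey.
- by have := H 1 ltr01; rewrite E leeNy_eq.
Qed.
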